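(* Let $(m_i,e_i)\in M\times\mathbb{Z}$, $i=1,\dots,r$, with $m_1,\dots,m_r$ nonzero and generating the lattice $M$. Let $\omega=\operatorname{Cone}(m_1,\dots,m_r)$ and $\Delta=\{v\in N_{\mathbb{Q}}:\langle m_i,v\rangle\ge-e_i,\ i=1,\dots,r\}$. Let $L=\mathbb{Q}_{\ge0}m\subset\omega$ be a ray with primitive lattice vector $m$. Let $p:\mathbb{Q}^r\to M_{\mathbb{Q}}$ be the linear map sending the $i$-th standard basis vector to $m_i$, let $\mathscr{H}_L$ be the Hilbert basis (in $\mathbb{Z}^r$) of the cone $p^{-1}(L)\cap\mathbb{Q}_{\ge0}^r$, and $\mathscr{H}_L^*=\{s\in\mathscr{H}_L: \sum_is_im_i\ne0\}$; for $s\in\mathscr{H}_L^*$ let $\lambda(s)\in\mathbb{Z}_{>0}$ be defined by $\sum_is_im_i=\lambda(s)m$. Then $\min_{v\in\Delta}\langle m,v\rangle=-\min_{s\in\mathscr{H}_L^*}\frac{\sum_{i=1}^rs_ie_i}{\lambda(s)}$.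
   Context: $M,N$ are dual lattices of finite rank with associated $\mathbb{Q}$-vector spaces $M_{\mathbb{Q}},N_{\mathbb{Q}}$. The Hilbert basis of a strongly convex rational polyhedral cone is the unique minimal generating set of the monoid of its lattice points. *)

(* Defs.v *)
(* M = Z^n as 'rV[int]_n, N_Q = Q^n as 'rV[rat]_n,
   Z^r as 'rV[int]_r. *)
From HB Require Import structures.
From mathcomp Require Import all_boot all_order all_algebra.
Set Implicit Arguments. Unset Strict Implicit. Unset Printing Implicit Defensive.
Import Order.TTheory GRing.Theory Num.Theory.
Local Open Scope ring_scope.

Definition toQ (n : nat) (x : 'rV[int]_n) : 'rV[rat]_n :=
  map_mx (fun z : int => (z%:~R : rat)) x.

Definition pair (n : nat) (m : 'rV[int]_n) (v : 'rV[rat]_n) : rat :=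
  \sum_(j < n) (m 0 j)%:~R * v 0 j.

Definition generates_lattice (n r : nat) (ms : 'I_r -> 'rV[int]_n) : Prop :=
  forall x : 'rV[int]_n, exists c : 'I_r -> int, x = \sum_(i < r) c i *: ms i.

Definition primitive (n : nat) (m : 'rV[int]_n) : Prop :=
  m != 0 /\ forall (k : int) (m' : 'rV[int]_n), m = k *: m' -> k = 1 \/ k = -1.

Definition in_cone (n r : nat) (ms : 'I_r -> 'rV[int]_n) (m : 'rV[int]_n) : Prop :=
  exists a : 'I_r -> rat, (forall i, 0 <= a i) /\
    toQ m = \sum_(i < r) a i *: toQ (ms i).

Definition in_Delta (n r : nat) (ms : 'I_r -> 'rV[int]_n) (es : 'I_r -> int)
  (v : 'rV[rat]_n) : Prop :=
  forall i, - ((es i)%:~R : rat) <= pair (ms i) v.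

Definition pZ (n r : nat) (ms : 'I_r -> 'rV[int]_n) (s : 'rV[int]_r) : 'rV[int]_n :=
  \sum_(i < r) s 0 i *: ms i.

Definition sdot (r : nat) (s : 'rV[int]_r) (es : 'I_r -> int) : int :=
  \sum_(i < r) s 0 i * es i.

Definition ray_monoid (n r : nat) (ms : 'I_r -> 'rV[int]_n) (m : 'rV[int]_n)
  (s : 'rV[int]_r) : Prop :=
  (forall i, 0 <= s 0 i) /\
  exists t : rat, 0 <= t /\ toQ (pZ ms s) = t *: toQ m.

Definition gen_monoid (r : nat) (H : 'rV[int]_r -> Prop) (x : 'rV[int]_r) : Prop :=
  exists c : seq 'rV[int]_r, (forall h, h \in c -> H h) /\ x = \sum_(h <- c) h.

(* H is a minimal generating set of the monoid S (= the Hilbert basis) *)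
Definition hilbert_basis (r : nat) (S H : 'rV[int]_r -> Prop) : Prop :=
  (forall h, H h -> S h) /\
  (forall x, S x <-> gen_monoid H x) /\
  (forall H' : 'rV[int]_r -> Prop, (forall h, H' h -> H h) ->
     (forall x, S x -> gen_monoid H' x) -> forall h, H h -> H' h).

(* Main.v *)
Require Import Defs.
From HB Require Import structures.
From mathcomp Require Import all_boot all_order all_algebra.
From mathcomp Require Import lra ring.
Import Order.TTheory GRing.Theory Num.Theory.
Local Open Scope ring_scope.
Set Implicit Arguments. Unset Strict Implicit. Unset Printing Implicit Defensive.

Section FM.
Variable n : nat.
Definition dot (a v : 'rV[rat]_n) : rat := \sum_(j < n) a 0 j * v 0 j.
Definition cstr := ('rV[rat]_n * rat * rat)%type.
Definition sat (p : cstr) (v : 'rV[rat]_n) (t : rat) := p.2 <= dot p.1.1 v + p.1.2 * t.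
Definition cadd (p q : cstr) : cstr := (p.1.1 + q.1.1, p.1.2 + q.1.2, p.2 + q.2).
Definition cscale (c : rat) (p : cstr) : cstr := (c *: p.1.1, c * p.1.2, c * p.2).

Inductive der (S : seq cstr) : cstr -> Prop :=
| dB p : p \in S -> der S p
| dA p q : der S p -> der S q -> der S (cadd p q)
| dS c p : 0 <= c -> der S p -> der S (cscale c p).

Lemma dotDl a b v : dot (a + b) v = dot a v + dot b v.
Proof. by rewrite /dot -big_split; apply eq_bigr => j _; rewrite mxE mulrDl. Qed.
Lemma dotZl c a v : dot (c *: a) v = c * dot a v.
Proof. by rewrite /dot mulr_sumr; apply eq_bigr => j _; rewrite mxE mulrA. Qed.
Lemma dot0l v : dot 0 v = 0.
Proof. by rewrite /dot big1 // => j _; rewrite mxE mul0r. Qed.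
Lemma dotNl a v : dot (- a) v = - dot a v.
Proof. by rewrite -scaleN1r dotZl mulN1r. Qed.
Lemma dot_suml I (r : seq I) (F : I -> 'rV[rat]_n) v :
  dot (\sum_(i <- r) F i) v = \sum_(i <- r) dot (F i) v.
Proof. exact: (big_morph (fun a => dot a v) (fun a b => dotDl a b v) (dot0l v)). Qed.

Lemma der_sound S p v t : der S p -> (forall q, q \in S -> sat q v t) -> sat p v t.
Proof.
move=> d hS; elim: d => {p} [p pS|p q _ hp _ hq|c p c0 _ hp]; first exact: hS.
- by rewrite /sat /= dotDl mulrDl addrACA lerD.
- move: hp; rewrite /sat /= dotZl -mulrA -mulrDr => hp; exact: ler_wpM2l.
Qed.

Lemma der_trans S S' p : (forall q, q \in S' -> der S q) -> der S' p -> der S p.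
Proof.
move=> h d; elim: d => {p} [p pS|p q _ hp _ hq|c p c0 _ hp].
- exact: h. - exact: dA. - exact: dS.
Qed.

Definition coef (p : cstr) j := p.1.1 0 j.
Definition comb j (p q : cstr) := cadd (cscale (- coef q j) p) (cscale (coef p j) q).
Definition fm (S : seq cstr) j :=
  [seq p <- S | coef p j == 0] ++
  [seq comb j p q | p <- [seq p <- S | 0 < coef p j], q <- [seq p <- S | coef p j < 0]].

Lemma coef_comb j j' p q : coef (comb j p q) j' = - coef q j * coef p j' + coef p j * coef q j'.
Proof. by rewrite /coef /= !mxE. Qed.

Lemma fm_der S j q : q \in fm S j -> der S q.
Proof.
rewrite mem_cat => /orP[|/allpairsP[[p1 p2] [/= h1 h2 ->]]].
  by rewrite mem_filter => /andP[_ ?]; apply: dB.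
move: h1 h2; rewrite !mem_filter => /andP[c1 i1] /andP[c2 i2].
apply: dA; apply: dS; try by apply: dB.
  by rewrite oppr_ge0 ltW.
by rewrite ltW.
Qed.

Lemma fm_zero S j q : q \in fm S j -> coef q j = 0.
Proof.
rewrite mem_cat => /orP[|/allpairsP[[p1 p2] [/= h1 h2 ->]]].
  by rewrite mem_filter => /andP[/eqP].
by rewrite coef_comb mulNr mulrC addNr.
Qed.

Lemma fm_zero' S j j' q : (forall p, p \in S -> coef p j' = 0) ->
  q \in fm S j -> coef q j' = 0.
Proof.
move=> hS; rewrite mem_cat => /orP[|/allpairsP[[p1 p2] [/= h1 h2 ->]]].
  by rewrite mem_filter => /andP[_ /hS].
move: h1 h2; rewrite !mem_filter => /andP[_ i1] /andP[_ i2].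
by rewrite coef_comb (hS _ i1) (hS _ i2) !mulr0 addr0.
Qed.

Lemma between (ls us : seq rat) : (forall l u, l \in ls -> u \in us -> l <= u) ->
  exists x, (forall l, l \in ls -> l <= x) /\ (forall u, u \in us -> x <= u).
Proof.
elim: ls => [|l ls IH] h.
  elim: us {h} => [|u us [x [_ hx]]]; first by exists 0.
  exists (Order.min x u); split => // w; rewrite inE => /orP[/eqP->|/hx]; first by rewrite ge_min lexx orbT.
  by move=> xw; rewrite ge_min xw.
have [x [h1 h2]] : exists x, (forall l, l \in ls -> l <= x) /\ (forall u, u \in us -> x <= u).
  by apply: IH => l' u l'l uu; apply: h => //; rewrite inE l'l orbT.
exists (Order.max l x); split.
  move=> w; rewrite inE => /orP[/eqP->|/h1]; first by rewrite le_max lexx.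
  by move=> wx; rewrite le_max wx orbT.
move=> u uu; rewrite ge_max h2 // andbT; apply: h => //; exact: mem_head.
Qed.

Definition upd (v : 'rV[rat]_n) j (x : rat) : 'rV[rat]_n :=
  \row_k (if k == j then x else v 0 k).

Definition rest (a v : 'rV[rat]_n) j := \sum_(k < n | k != j) a 0 k * v 0 k.

Lemma dot_upd a v j x : dot a (upd v j x) = a 0 j * x + rest a v j.
Proof.
rewrite /dot (bigD1 j) //= mxE eqxx; congr (_ + _).
by apply: eq_bigr => k /negbTE kj; rewrite mxE kj.
Qed.

Lemma dot_rest a v j : dot a v = a 0 j * v 0 j + rest a v j.
Proof. by rewrite /dot (bigD1 j). Qed.

Lemma fm_lift S j v t : (forall q, q \in fm S j -> sat q v t) ->
  exists x, forall p, p \in S -> sat p (upd v j x) t.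
Proof.
move=> h.
pose R (p : cstr) := rest p.1.1 v j + p.1.2 * t.
pose P := [seq p <- S | 0 < coef p j]; pose N := [seq p <- S | coef p j < 0].
have hb : forall l u, l \in [seq (p.2 - R p) / coef p j | p <- P] ->
     u \in [seq (p.2 - R p) / coef p j | p <- N] -> l <= u.
  move=> l u /mapP[p pP ->] /mapP[q qN ->].
  have hc : comb j p q \in fm S j by rewrite mem_cat; apply/orP; right; apply/allpairsP; exists (p, q).
  move: (h _ hc) (hc) => /= ; rewrite /sat /comb /cadd /cscale /= dotDl !dotZl.
  move: pP qN; rewrite !mem_filter => /andP[pp _] /andP[qn _].
  rewrite !(dot_rest _ v j) => hh _.
  rewrite ler_pdivrMr // mulrAC ler_ndivlMr //.
  rewrite /R; move: hh; rewrite /coef in pp qn *.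
  set A := p.1.1 0 j; set B := q.1.1 0 j.
  move=> hh. nra.
have [x [hl hu]] := between hb.
exists x => p pS; rewrite /sat dot_upd.
have [pp|pn|pz] := ltrgtP (coef p j) 0.
- have : (p.2 - R p) / coef p j >= x by apply: hu; apply/mapP; exists p => //; rewrite mem_filter pp.
  rewrite ler_ndivlMr // /R /coef => hh. rewrite /coef in pp; nra.
- have : (p.2 - R p) / coef p j <= x by apply: hl; apply/mapP; exists p => //; rewrite mem_filter pn.
  rewrite ler_pdivrMr // /R /coef => hh. rewrite /coef in pn; nra.
- have hq : p \in fm S j by rewrite mem_cat mem_filter pz eqxx pS.
  have := h _ hq; rewrite /sat (dot_rest _ v j) /coef in pz *; rewrite pz !mul0r !add0r.
  done.
Qed.


Lemma fm_iter S (js : seq 'I_n) : exists S' : seq cstr,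
  (forall q, q \in S' -> der S q) /\
  (forall q j, q \in S' -> j \in js -> coef q j = 0) /\
  (forall v t, (forall q, q \in S' -> sat q v t) -> exists v', forall p, p \in S -> sat p v' t).
Proof.
elim: js => [|j js [S1 [h1 [h2 h3]]]].
  by exists S; split; [move=> q; exact: dB | split => // v t h; exists v].
exists (fm S1 j); split.
  move=> q /fm_der; apply: der_trans => q' /h1 //.
split.
  move=> q j' qS; rewrite inE => /orP[/eqP->|jj]; first exact: (fm_zero qS).
  by apply: (fm_zero' _ qS) => p pS; apply: h2.
move=> v t h; have [x hx] := fm_lift h; exact: h3 hx.
Qed.

Lemma fm_all S : exists S' : seq cstr,
  (forall q, q \in S' -> der S q) /\
  (forall q, q \in S' -> q.1.1 = 0) /\
  (forall v t, (forall q, q \in S' -> sat q v t) -> exists v', forall p, p \in S -> sat p v' t).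
Proof.
have [S' [h1 [h2 h3]]] := fm_iter S (enum 'I_n).
exists S'; split => //; split => // q qS; apply/rowP => j.
by rewrite mxE; apply: (h2 q j) => //; rewrite mem_enum.
Qed.

Lemma sat0 (q : cstr) v t : q.1.1 = 0 -> sat q v t = (q.2 <= q.1.2 * t).
Proof. by move=> h; rewrite /sat h dot0l add0r. Qed.

End FM.
Lemma pair_dot n (x : 'rV[int]_n) v : pair x v = dot (toQ x) v.
Proof. by apply: eq_bigr => j _; rewrite mxE. Qed.

Lemma intr_sum I (r : seq I) (F : I -> int) :
  ((\sum_(i <- r) F i)%:~R : rat) = \sum_(i <- r) (F i)%:~R.
Proof. exact: (big_morph (fun z : int => (z%:~R : rat)) (@intrD _) (mulr0z 1)). Qed.

Lemma toQ_pZ n r (ms : 'I_r -> 'rV[int]_n) s :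
  toQ (pZ ms s) = \sum_(i < r) (s 0 i)%:~R *: toQ (ms i).
Proof.
apply/rowP => j; rewrite /toQ /pZ mxE !summxE intr_sum.
by apply: eq_bigr => i _; rewrite !mxE intrM.
Qed.

Lemma toQ_inj n (x y : 'rV[int]_n) : toQ x = toQ y -> x = y.
Proof. by move=> h; apply/rowP => j; move/rowP: h => /(_ j); rewrite !mxE => /intr_inj. Qed.

Lemma toQZ n (k : int) (x : 'rV[int]_n) : toQ (k *: x) = k%:~R *: toQ x.
Proof. by apply/rowP => j; rewrite !mxE intrM. Qed.

Lemma pZD n r (ms : 'I_r -> 'rV[int]_n) s1 s2 : pZ ms (s1 + s2) = pZ ms s1 + pZ ms s2.
Proof. by rewrite /pZ -big_split; apply: eq_bigr => i _; rewrite mxE scalerDl. Qed.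
Lemma pZ0 n r (ms : 'I_r -> 'rV[int]_n) : pZ ms 0 = 0.
Proof. by rewrite /pZ big1 // => i _; rewrite mxE scale0r. Qed.
Lemma sdotD r (s1 s2 : 'rV[int]_r) es : sdot (s1 + s2) es = sdot s1 es + sdot s2 es.
Proof. by rewrite /sdot -big_split; apply: eq_bigr => i _; rewrite mxE mulrDl. Qed.
Lemma sdot0 r es : sdot (0 : 'rV[int]_r) es = 0.
Proof. by rewrite /sdot big1 // => i _; rewrite mxE mul0r. Qed.

Lemma psum_seq0 (T : eqType) (cs : seq T) (F : T -> rat) :
  (forall h, h \in cs -> 0 <= F h) -> \sum_(h <- cs) F h = 0 ->
  forall h, h \in cs -> F h = 0.
Proof.
elim: cs => [|a cs IH] hp; first by [].
rewrite big_cons => hs h; rewrite inE.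
have ha : 0 <= F a by apply: hp; rewrite mem_head.
have hr : 0 <= \sum_(h <- cs) F h.
  by rewrite big_seq; apply: sumr_ge0 => i ic; apply: hp; rewrite inE ic orbT.
move/eqP: hs; rewrite paddr_eq0 // => /andP[/eqP fa /eqP fr].
case/orP => [/eqP->//|hc]; apply: IH => //.
by move=> i ic; apply: hp; rewrite inE ic orbT.
Qed.

Lemma psum_seq_pos (T : eqType) (cs : seq T) (F : T -> rat) :
  0 < \sum_(h <- cs) F h -> exists2 h, h \in cs & 0 < F h.
Proof.
move=> hs; case: (boolP (has (fun h => 0 < F h) cs)) => [/hasP[h ? ?]|]; first by exists h.
move/hasPn => hn; exfalso; move: hs; apply/negP; rewrite -leNgt big_seq.
by apply: sumr_le0 => i /hn; rewrite -leNgt.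
Qed.

Lemma prim_int n (m x : 'rV[int]_n) (t : rat) : primitive m ->
  toQ x = t *: toQ m -> exists l : int, t = l%:~R.
Proof.
move=> [m0 hp] hx.
have hd : forall j, (denq t %| m ord0 j)%Z.
  move=> j; move/rowP: hx => /(_ j); rewrite !mxE => hj.
  have e : denq t * x 0 j = numq t * m 0 j.
    apply: (@intr_inj rat); rewrite !intrM hj numqE; ring.
  have cop : coprimez (denq t) (numq t).
    by rewrite /coprimez /gcdz gcdnC; have := coprime_num_den t.
  by rewrite -(Gauss_dvdzr _ cop) -e dvdz_mulr.
have := hp (denq t) (\row_j ((m ord0 j) %/ denq t)%Z).
case.
- by apply/rowP => j; rewrite !mxE mulrC divzK.
- by move=> d1; exists (numq t); rewrite numqE d1 mulr1.
- move=> d1; have := denq_gt0 t; by rewrite d1.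
Qed.

Lemma intr_prod I (r : seq I) (P : pred I) (F : I -> int) :
  ((\prod_(i <- r | P i) F i)%:~R : rat) = \prod_(i <- r | P i) (F i)%:~R.
Proof. exact: (big_morph (fun z : int => (z%:~R : rat)) (@intrM _) (mulr1z 1)). Qed.

Lemma seq_max (s : seq rat) : s != [::] -> exists2 x, x \in s & forall y, y \in s -> y <= x.
Proof.
elim: s => [//|a s IH] _.
case: s IH => [|b s] IH; first by exists a; rewrite ?mem_head // => y; rewrite inE => /eqP->.
have [x xin xm] := IH isT.
case: (leP a x) => h.
  exists x; first by rewrite inE xin orbT.
  by move=> y; rewrite inE => /orP[/eqP->//|/xm].
exists a; first exact: mem_head.
move=> y; rewrite inE => /orP[/eqP->//|/xm yx]; exact: (le_trans yx (ltW h)).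
Qed.

Unset Implicit Arguments.
Theorem lemma4p4p11 (n r : nat) (ms : 'I_r -> 'rV[int]_n) (es : 'I_r -> int)
  (m : 'rV[int]_n) (H : 'rV[int]_r -> Prop) :
  (forall i, ms i != 0) ->
  generates_lattice ms ->
  primitive m ->
  in_cone ms m ->
  (exists v, in_Delta ms es v) ->
  hilbert_basis (ray_monoid ms m) H ->
  exists v0 : 'rV[rat]_n,
    in_Delta ms es v0 /\
    (forall v, in_Delta ms es v -> pair m v0 <= pair m v) /\
    exists (s0 : 'rV[int]_r) (l0 : int),
      H s0 /\ pZ ms s0 != 0 /\ pZ ms s0 = l0 *: m /\ 0 < l0 /\
      (forall (s : 'rV[int]_r) (l : int), H s -> pZ ms s != 0 -> pZ ms s = l *: m ->
         ((sdot s0 es)%:~R / l0%:~R : rat) <= (sdot s es)%:~R / l%:~R) /\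
      pair m v0 = - ((sdot s0 es)%:~R / l0%:~R).
Proof.
move=> _ _ hprim [a [a0 ha]] [vf hvf] [HS [Hgen _]].
set c := toQ m in ha *.
pose mQ i := toQ (ms i).
pose S0 : seq (cstr n) := [seq (mQ i, 0, - (es i)%:~R) | i <- enum 'I_r] ++ [:: (- c, 1, 0); (c, -1, 0)].
have satA : forall v, in_Delta ms es v -> forall p, p \in S0 -> sat p v (dot c v).
  move=> v hv p; rewrite mem_cat => /orP[/mapP[i _ ->]|]; rewrite /sat /=.
    by rewrite mul0r addr0 -pair_dot; apply: hv.
  by rewrite !inE => /orP[/eqP->|/eqP->] /=; rewrite ?dotNl; lra.
have satB : forall v t, (forall p, p \in S0 -> sat p v t) -> in_Delta ms es v /\ dot c v = t.
  move=> v t h; split.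
    move=> i; have := h (mQ i, 0, - (es i)%:~R); rewrite /sat /= mul0r addr0 pair_dot; apply.
    by rewrite mem_cat; apply/orP; left; apply/mapP; exists i; rewrite ?mem_enum.
  have h1 := h (-c, 1, 0); have h2 := h (c, -1, 0).
  rewrite /sat /= dotNl in h1 h2.
  have : 0 <= - dot c v + 1 * t by apply: h1; rewrite mem_cat !inE eqxx orbT.
  have : 0 <= dot c v + -1 * t by apply: h2; rewrite mem_cat !inE eqxx !orbT.
  lra.
have cert : forall p, der S0 p -> exists y : 'I_r -> rat, exists u w : rat,
   [/\ (forall i, 0 <= y i), 0 <= u & 0 <= w] /\ [/\
       p.1.1 = \sum_i y i *: mQ i + (w - u) *: c,
       p.1.2 = u - w & p.2 = - \sum_i y i * (es i)%:~R].
  move=> p; elim => {p}.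
  - move=> p; rewrite mem_cat => /orP[/mapP[i _ ->]|].
      exists (fun k => (k == i)%:R), 0, 0; split; split => //=.
      + rewrite subrr scale0r addr0 (bigD1 i) //= eqxx scale1r big1 ?addr0 // => k /negbTE ->.
        by rewrite scale0r.
      + rewrite (bigD1 i) //= eqxx mul1r big1 ?addr0 // => k /negbTE ->.
        by rewrite mul0r.
    rewrite !inE => /orP[/eqP->|/eqP->].
      exists (fun _ => 0), 1, 0; split; split => //=.
      + by rewrite big1 ?add0r ?sub0r ?scaleN1r // => i _; rewrite scale0r.
      + by rewrite big1 ?oppr0 // => i _; rewrite mul0r.
    exists (fun _ => 0), 0, 1; split; split => //=.
    + by rewrite big1 ?add0r ?subr0 ?scale1r // => i _; rewrite scale0r.
    + by rewrite big1 ?oppr0 // => i _; rewrite mul0r.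
  - move=> p q _ [y1 [u1 [w1 [[hy1 hu1 hw1] [ha1 hk1 hb1]]]]] _ [y2 [u2 [w2 [[hy2 hu2 hw2] [ha2 hk2 hb2]]]]].
    exists (fun i => y1 i + y2 i), (u1 + u2), (w1 + w2); split; split => /=.
    + by move=> i; rewrite addr_ge0.
    + by rewrite addr_ge0.
    + by rewrite addr_ge0.
    + rewrite ha1 ha2; have -> : \sum_i (y1 i + y2 i) *: mQ i = \sum_i y1 i *: mQ i + \sum_i y2 i *: mQ i.
        by rewrite -big_split; apply: eq_bigr => i _; rewrite scalerDl.
      have -> : w1 + w2 - (u1 + u2) = (w1 - u1) + (w2 - u2) by ring.
      have -> : ((w1 - u1) + (w2 - u2)) *: c = (w1 - u1) *: c + (w2 - u2) *: c by rewrite scalerDl.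
      by rewrite addrACA.
    + by rewrite hk1 hk2; ring.
    + rewrite hb1 hb2; have -> : \sum_i (y1 i + y2 i) * (es i)%:~R = \sum_i y1 i * (es i)%:~R + \sum_i y2 i * (es i)%:~R.
        by rewrite -big_split; apply: eq_bigr => i _; rewrite mulrDl.
      by rewrite opprD.
  - move=> k p k0 _ [y [u [w [[hy hu hw] [ha1 hk1 hb1]]]]].
    exists (fun i => k * y i), (k * u), (k * w); split; split => /=.
    + by move=> i; rewrite mulr_ge0.
    + by rewrite mulr_ge0.
    + by rewrite mulr_ge0.
    + rewrite ha1 scalerDr scaler_sumr scalerA -mulrBr; congr (_ + _).
      by apply: eq_bigr => i _; rewrite scalerA.
    + by rewrite hk1 mulrBr.
    + by rewrite hb1 mulrN mulr_sumr; congr (- _); apply: eq_bigr => i _; rewrite mulrA.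
have [S' [hder [hz hlift]]] := fm_all S0.
pose T t := forall q, q \in S' -> q.2 <= q.1.2 * t.
have Tsound : forall v, in_Delta ms es v -> T (dot c v).
  move=> v hv q qS; rewrite -(sat0 v) ?hz //; apply: der_sound (hder _ qS) _; exact: satA.
have Tlift : forall t, T t -> exists2 v, in_Delta ms es v & dot c v = t.
  move=> t ht; have [v' hv'] := hlift (0 : 'rV_n) t (fun q qS => ltac:(rewrite sat0 ?hz //; exact: ht)).
  by have [h1 h2] := satB _ _ hv'; exists v'.
have bnd : forall v, in_Delta ms es v -> - \sum_i a i * (es i)%:~R <= dot c v.
  move=> v hv; rewrite ha dot_suml -sumrN; apply: ler_sum => i _.
  rewrite dotZl -pair_dot -mulrN; apply: ler_wpM2l; [exact: a0 | exact: hv].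
pose ls := [seq q.2 / q.1.2 | q <- S' & 0 < q.1.2].
have lsne : ls != [::].
  apply/negP => /eqP ls0.
  pose B := - \sum_i a i * (es i)%:~R.
  have hb : forall l u, l \in [::] -> u \in (B - 1) :: [seq q.2 / q.1.2 | q <- S' & q.1.2 < 0] -> l <= u by [].
  have [x [_ hx]] := between hb.
  have Tx : T x.
    move=> q qS; case: (ltrgtP q.1.2 0) => hk.
    - have h : x <= q.2 / q.1.2.
        by apply: hx; rewrite inE; apply/orP; right; apply/mapP; exists q; rewrite // mem_filter hk.
      by rewrite ler_ndivlMr // mulrC in h.
    - have : q.2 / q.1.2 \in ls by apply/mapP; exists q; rewrite // mem_filter hk.
      by rewrite ls0.
    - by have := Tsound vf hvf q qS; rewrite hk !mul0r.
  have [v hv hvx] := Tlift x Tx.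
  have := bnd v hv; have := hx (B - 1) (mem_head _ _); rewrite hvx /B; lra.
have [ts tsin tsmax] := seq_max lsne.
move: tsin => /mapP[qs]; rewrite mem_filter => /andP[ks qsS] tsE.
have tsle : forall v, in_Delta ms es v -> ts <= dot c v.
  by move=> v hv; have := Tsound v hv qs qsS; rewrite tsE ler_pdivrMr // mulrC.
have Tts : T ts.
  move=> q qS; case: (ltrP 0 q.1.2) => hk.
    have h : q.2 / q.1.2 <= ts by apply: tsmax; apply/mapP; exists q; rewrite // mem_filter hk.
    by rewrite ler_pdivrMr // mulrC in h.
  have h1 := Tsound vf hvf q qS; have h2 := tsle vf hvf; nra.
have [v0 hv0 hv0c] := Tlift ts Tts.
have [y [u [w [[hy hu hw] [ha' hk' hb']]]]] := cert qs (hder qs qsS).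
rewrite (hz qs qsS) in ha'.
have hsum : \sum_i y i *: mQ i = qs.1.2 *: c.
  by move/eqP: ha'; rewrite eq_sym addr_eq0 => /eqP ->; rewrite -scaleNr opprB hk'.
have kap0 : qs.1.2 != 0 by rewrite gt_eqF.
pose y' i := y i / qs.1.2.
pose D := \prod_(i < r) denq (y' i).
pose s : 'rV[int]_r := \row_i (numq (y' i) * \prod_(j < r | j != i) denq (y' j)).
have hsi : forall i, ((s 0 i)%:~R : rat) = y' i * D%:~R.
  move=> i; rewrite mxE [LHS](intrM rat) /D [in RHS](bigD1 i) //= [in RHS](intrM rat) numqE mulrA //.
have D0 : 0 < D by apply: prodr_gt0 => i _; exact: denq_gt0.
have hy' : forall i, 0 <= y' i by move=> i; rewrite divr_ge0 // ltW.
have s0 : forall i, 0 <= s 0 i.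
  by move=> i; rewrite -(ler0z rat) hsi mulr_ge0 // ler0z ltW.
have hpZs : toQ (pZ ms s) = D%:~R *: c.
  rewrite toQ_pZ (eq_bigr (fun i => D%:~R *: (qs.1.2^-1 *: (y i *: mQ i)))); last first.
    by move=> i _; rewrite hsi /y' !scalerA; congr (_ *: _); ring.
  by rewrite -scaler_sumr -scaler_sumr hsum !scalerA divfK.
have rms : ray_monoid ms m s.
  by split => //; exists D%:~R; split => //; rewrite ler0z ltW.
have [cs [csH scs]] := proj1 (Hgen s) rms.
have [j0 hj0] : exists j0, m 0 j0 != 0.
  case: hprim => m0 _; case: (boolP [exists j, m 0 j != 0]) => [/existsP//|/existsPn hn].
  exfalso; move/negP: m0; apply; apply/eqP/rowP => j; rewrite mxE.
  by move: (hn j); rewrite negbK => /eqP.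
pose tf (x : 'rV[int]_r) := (((pZ ms x) 0 j0)%:~R / (m 0 j0)%:~R : rat).
have mj0 : (m 0 j0)%:~R != 0 :> rat by rewrite intr_eq0.
have tfE : forall x t, toQ (pZ ms x) = t *: c -> t = tf x.
  by move=> x t /rowP/(_ j0); rewrite !mxE /tf => ->; rewrite mulfK.
have tfadd : forall x y, tf (x + y) = tf x + tf y.
  by move=> x1 x2; rewrite /tf pZD mxE intrD mulrDl.
have tf0 : tf 0 = 0 by rewrite /tf pZ0 mxE mul0r.
have weak : forall (h : 'rV[int]_r) (v : 'rV[rat]_n), (forall i, 0 <= h 0 i) -> in_Delta ms es v ->
   - (sdot h es)%:~R <= dot (toQ (pZ ms h)) v.
  move=> h v hh hv; rewrite toQ_pZ dot_suml /sdot intr_sum -sumrN; apply: ler_sum => i _.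
  by rewrite dotZl -pair_dot intrM -mulrN; apply: ler_wpM2l; [rewrite ler0z | exact: hv].
have Hinfo : forall h, H h -> 0 <= tf h /\ toQ (pZ ms h) = tf h *: c.
  by move=> h /HS [hh [t [t0 ht]]]; have e := tfE _ _ ht; rewrite -e.
have fge0 : forall h, h \in cs -> 0 <= (sdot h es)%:~R + tf h * ts.
  move=> h /csH hH; have [t0 ht] := Hinfo h hH; have := weak h v0 (proj1 (HS h hH)) hv0.
  by rewrite ht dotZl hv0c; lra.
have e2 : \sum_(h <- cs) tf h = D%:~R.
  by rewrite (tfE _ _ hpZs) scs; apply: esym; apply: (big_morph tf tfadd tf0).
have sum0 : \sum_(h <- cs) ((sdot h es)%:~R + tf h * ts) = 0.
  rewrite big_split /= -mulr_suml e2.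
  have e1 : \sum_(h <- cs) ((sdot h es)%:~R : rat) = (sdot s es)%:~R.
    rewrite scs -intr_sum; congr (_ %:~R).
    by apply: esym; apply: (big_morph (fun x => sdot x es) (fun x y => sdotD x y es) (@sdot0 r es)).
  rewrite e1 /sdot intr_sum (eq_bigr (fun i => D%:~R * qs.1.2^-1 * (y i * (es i)%:~R))); last first.
    by move=> i _; rewrite intrM hsi /y'; ring.
  rewrite -mulr_sumr.
  have -> : \sum_i y i * (es i)%:~R = - qs.2 by rewrite hb' opprK.
  rewrite tsE; ring.
have allz := psum_seq0 fge0 sum0.
have [h0 h0cs tfh0] : exists2 h, h \in cs & 0 < tf h by apply: psum_seq_pos; rewrite e2 ltr0z.
have h0H := csH h0 h0cs.
have [t00 ht0] := Hinfo h0 h0H.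
have [l0 hl0] := prim_int hprim ht0.
have pZh0 : pZ ms h0 = l0 *: m by apply: toQ_inj; rewrite toQZ -hl0.
have l0pos : 0 < l0 by rewrite -(ltr0z rat) -hl0.
have l0n : (l0%:~R : rat) != 0 by rewrite intr_eq0 gt_eqF.
have sdh0 : ((sdot h0 es)%:~R : rat) = - (l0%:~R * ts).
  by have := allz h0 h0cs; rewrite -hl0 => /eqP; rewrite addr_eq0 => /eqP.
have key : (sdot h0 es)%:~R / l0%:~R = - ts.
  by rewrite sdh0 mulNr mulrC mulKf.
exists v0; split => //; split.
  by move=> v hv; rewrite !pair_dot hv0c; apply: tsle.
exists h0, l0; split => //; split.
  rewrite pZh0; apply/eqP => /rowP/(_ j0); rewrite !mxE => /eqP; by rewrite mulf_eq0 (gt_eqF l0pos) (negbTE hj0).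
split => //; split => //; split; last by rewrite key opprK pair_dot hv0c.
move=> s1 l hs1 hnz hl.
have [tt ht1] := Hinfo s1 hs1.
have el : (l%:~R : rat) = tf s1 by apply: tfE; rewrite hl toQZ.
have lpos : 0 < l.
  rewrite lt_def; apply/andP; split; last by rewrite -(ler0z rat) el.
  by apply/negP => /eqP l0'; move: hnz; rewrite hl l0' scale0r eqxx.
have := weak s1 v0 (proj1 (HS s1 hs1)) hv0; rewrite hl toQZ dotZl hv0c => hw'.
rewrite key ler_pdivlMr ?ltr0z //; lra.
Qed.
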